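(* For a space $X$ the following are equivalent: (i) For every vector space $E$, each convex-valued totally-l.s.c. mapping $\Phi:X\rightrightarrows E$ has a selection which is continuous with respect to the finite topology on $E$. (ii) Each open cover of $X$ has a canonical map. (iii) Each open cover of $X$ has an index-subordinated partition of unity.
   Context: Set-valued mappings $\Phi:X\rightrightarrows E$ assign nonempty subsets; convex-valued means each $\Phi(x)$ is convex; totally-l.s.c. means $\{x:\Phi(x)\cap U\neq\emptyset\}$ is open for every subset $U\subseteq E$. The finite topology on $E$: $U$ open iff $U\cap L$ open in each finite-dimensional linear subspace $L$ (Euclidean topology). For a set $V$, $\mathbf{c}_{00}(V)$ is the vector space of finitely supported functions $V\to\mathbb{R}$, each $v\in V$ identified with its characteristic function. A simplicial complex $\Sigma$ on vertex set $V$ is a family of nonempty finite subsets of $V$ closed under nonempty subsets; its geometric realisation $|\Sigma|=\bigcup_{\sigma\in\Sigma}\operatorname{conv}(\sigma)\subseteq\mathbf{c}_{00}(V)$ carries the Whitehead topology ($U$ open iff $U\cap\operatorname{conv}(\sigma)$ is open in the Euclidean simplex $\operatorname{conv}(\sigma)$ for each $\sigma$), which is the subspace topology of the finite topology. For a cover $\mathcal{U}$ of $X$ (a family of nonempty subsets with union $X$), its nerve is $\mathcal{N}(\mathcal{U})=\{\sigma\subseteq\mathcal{U}: \sigma \text{ finite nonempty},\ \bigcap\sigma\ne\emptyset\}$. A canonical map for $\mathcal{U}$ is a continuous $f:X\to|\mathcal{N}(\mathcal{U})|$ such that $\{x: f(x)(U)\neq0\}\subseteq U$ for every $U\in\mathcal{U}$.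 A partition of unity indexed by $\mathcal{A}$ is a family of continuous $\xi_\alpha:X\to[0,1]$ with $\sum_\alpha\xi_\alpha(x)=1$ for all $x$; it is index-subordinated to an open cover $\{U_\alpha\}_{\alpha\in\mathcal{A}}$ if $\{x:\xi_\alpha(x)\ne0\}\subseteq U_\alpha$ for every $\alpha$. *)

(* Defs.v *)
From HB Require Import structures.
From mathcomp Require Import all_boot all_order all_algebra.
From mathcomp Require Import all_classical all_reals.
From mathcomp Require Import topology normedtype numfun esum convex.
Set Implicit Arguments. Unset Strict Implicit. Unset Printing Implicit Defensive.
Import Order.TTheory GRing.Theory Num.Theory numFieldNormedType.Exports.
Local Open Scope classical_set_scope.
Local Open Scope ring_scope.

(* Finite topology on the linear subspace [S] of a real vector space [E]
   (S is the ambient subspace: [setT] for E itself, c00(V) inside V -> R).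
   U is open iff U ∩ L is (Euclidean-)open in every finite-dimensional
   linear subspace L of S.  The Euclidean topology of L is written out through
   coordinates: for every finite family v_1..v_n of vectors of S, the preimage
   of U under the linear map t |-> \sum_i t_i v_i : R^n -> E is open in R^n.
   (Every finite family spans a finite-dimensional L, and for a basis of L this
   map is a homeomorphism R^n ~ L.) *)
Definition finite_open {R : realType} {E : lmodType R} (S : set E) (U : set E)
  : Prop :=
  forall (n : nat) (v : 'I_n -> E), (forall i, S (v i)) ->
    open [set t : 'rV[R]_n | U (\sum_(i < n) t ord0 i *: v i)].

Definition finite_continuous {R : realType} {X : topologicalType}
  {E : lmodType R} (S : set E) (f : X -> E) : Prop :=
  forall U : set E, finite_open S U -> open (f @^-1` U).

Definition totally_lsc {X : topologicalType} {E : Type} (Phi : X -> set E)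
  : Prop :=
  forall U : set E, open [set x | Phi x `&` U !=set0].

Definition open_cover {X : topologicalType} (CU : set (set X)) : Prop :=
  (forall W, CU W -> open W /\ W !=set0) /\ \bigcup_(W in CU) W = setT.

Definition open_icover {X : topologicalType} {A : Type} (U : A -> set X)
  : Prop :=
  (forall a, open (U a) /\ U a !=set0) /\ \bigcup_(a in setT) U a = setT.

(* c00(CU): finitely supported real functions on the vertex set CU
   (vertices W identified with their characteristic functions \1_[set W]). *)
Definition c00 {R : realType} {X : Type} (CU : set (set X))
  (g : set X -> R) : Prop :=
  finite_set [set W | g W != 0] /\ [set W | g W != 0] `<=` CU.

(* g lies in the geometric realisation |N(CU)| of the nerve of CU:
   g is a convex combination of the vertices of some simplex sigma of the
   nerve, i.e. a finite nonempty family of members of CU with nonempty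
   intersection. *)
Definition in_nerve_realisation {R : realType} {X : Type} (CU : set (set X))
  (g : set X -> R) : Prop :=
  exists (n : nat) (sigma : 'I_n -> set X) (lam : 'I_n -> R),
    [/\ (0 < n)%N, (forall i, CU (sigma i)),
        (exists x, forall i, sigma i x),
        (forall i, 0 <= lam i) /\ \sum_(i < n) lam i = 1 &
        g = \sum_(i < n) lam i *: (\1_[set sigma i] : set X -> R)].

Definition canonical_map {R : realType} {X : topologicalType}
  (CU : set (set X)) (f : X -> (set X -> R)) : Prop :=
  [/\ forall x, in_nerve_realisation CU (f x),
      finite_continuous (c00 CU) f &
      forall W, CU W -> [set x | f x W != 0] `<=` W].

Definition subordinated_pu {R : realType} {X : topologicalType}
  {A : choiceType} (U : A -> set X) (xi : A -> X -> R) : Prop :=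
  [/\ forall a, continuous (xi a),
      forall a x, 0 <= xi a x <= 1,
      forall x, (\esum_(a in setT) (xi a x)%:E = 1%:E)%E &
      forall a, [set x | xi a x != 0] `<=` U a].

(* Main.v *)
Require Import Defs.
From HB Require Import structures.
From mathcomp Require Import all_boot all_order all_algebra.
From mathcomp Require Import all_classical all_reals.
From mathcomp Require Import topology normedtype numfun esum convex.
From mathcomp Require Import interval_inference ereal lra.
Import Order.TTheory GRing.Theory Num.Theory numFieldNormedType.Exports.
Local Open Scope classical_set_scope.
Local Open Scope ring_scope.
Set Implicit Arguments. Unset Strict Implicit. Unset Printing Implicit Defensive.

Lemma sum_supp_eq (T : eqType) (V : zmodType) (F : T -> V) (s1 s2 : seq T) :
  uniq s1 -> uniq s2 -> (forall x, F x != 0 -> x \in s1) ->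
  (forall x, F x != 0 -> x \in s2) ->
  \sum_(x <- s1) F x = \sum_(x <- s2) F x.
Proof.
move=> u1 u2 h1 h2.
have E s : \sum_(x <- s) F x = \sum_(x <- s | F x != 0) F x.
  by rewrite (bigID (fun x => F x == 0)) /= big1 ?add0r //; move=> x /eqP.
rewrite E [RHS]E -[LHS]big_filter -[RHS]big_filter; apply: perm_big; apply: uniq_perm; rewrite ?filter_uniq //.
move=> x; rewrite !mem_filter; case: (F x =P 0) => //= /eqP nz.
by rewrite (h1 _ nz) (h2 _ nz).
Qed.

Lemma near_seq (T : Type) (F : set_system T) (I : eqType) (s : seq I)
  (P : I -> T -> Prop) : Filter F ->
  (forall i, i \in s -> \forall x \near F, P i x) ->
  \forall x \near F, forall i, i \in s -> P i x.
Proof.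
move=> FF; elim: s => [|i s IH] H; first by apply: nearW => x j; rewrite in_nil.
have H1 := H i (mem_head _ _).
have H2 : \forall x \near F, forall j, j \in s -> P j x.
  by apply: IH => j js; apply: H; rewrite inE js orbT.
apply: filterS2 H1 H2 => x h1 h2 j; rewrite inE => /orP[/eqP->//|]; exact: h2.
Qed.

Lemma continuous_sum (R : realType) (X : topologicalType) (I : Type) (s : seq I)
  (g : I -> X -> R) :
  (forall i, continuous (g i)) -> continuous (fun x => \sum_(i <- s) g i x).
Proof.
move=> cg; elim: s => [|i s IH].
  have -> : (fun x : X => \sum_(i <- [::]) g i x) = (fun=> 0) by apply: funext => x; rewrite big_nil.
  exact: cst_continuous.
have -> : (fun x : X => \sum_(j <- i :: s) g j x) = g i + (fun x => \sum_(j <- s) g j x).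
  by apply: funext => x; rewrite big_cons.
by move=> x; apply: continuousD; [exact: cg|exact: IH].
Qed.

Lemma sum_ge_term (R : realType) (I : eqType) (s : seq I) (g : I -> R) (i : I) :
  uniq s -> i \in s -> (forall j, 0 <= g j) -> g i <= \sum_(j <- s) g j.
Proof.
move=> us iS g0; rewrite (bigD1_seq i) //= lerDl; apply: sumr_ge0 => j _; exact: g0.
Qed.

Lemma sum_nz_term (I : eqType) (V : zmodType) (s : seq I) (F : I -> V) :
  \sum_(i <- s) F i != 0 -> exists2 i, i \in s & F i != 0.
Proof.
move=> h; apply: contrapT => hn; move/eqP: h; apply; rewrite big1_seq // => i /= iS.
by apply/eqP/negPn/negP => nz; apply: hn; exists i.
Qed.

Lemma convE (R : realType) (E : lmodType R) (x y : convex_lmodType E) (p : {i01 R}) :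
  conv p x y = (p%:num *: (x : E) + (1 - p%:num) *: (y : E) : E).
Proof. reflexivity. Qed.

Lemma convex_comb (R : realType) (E : lmodType R) (C : set (convex_lmodType E))
  (I : eqType) (s : seq I) (lam : I -> R) (p : I -> E) :
  convex_set C -> (forall i, 0 <= lam i) -> \sum_(i <- s) lam i = 1 ->
  (forall i, i \in s -> lam i != 0 -> C (p i)) ->
  C (\sum_(i <- s) lam i *: p i).
Proof.
move=> cC; elim: s lam => [|i s IH] lam l0 l1 hC.
  by move: l1; rewrite big_nil => /eqP; rewrite eq_sym oner_eq0.
rewrite big_cons; move: l1; rewrite big_cons => l1.
set m := \sum_(j <- s) lam j in l1.
have m0 : 0 <= m by apply: sumr_ge0.
have [mz|mnz] := eqVneq m 0.
  have lz : forall j, j \in s -> lam j = 0.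
    move=> j js; apply/eqP; move/eqP: mz; rewrite /m psumr_eq0; last by move=> k _; exact: l0.
    by move/allP => /(_ j js).
  rewrite big1_seq ?addr0; last by move=> j /andP[_ js]; rewrite lz // scale0r.
  have li : lam i = 1 by move: l1; rewrite mz addr0.
  rewrite li scale1r; apply: hC; first exact: mem_head.
  by rewrite li oner_eq0.
have mpos : 0 < m by rewrite lt_def mnz m0.
pose lam' j := lam j / m.
have Cq : C (\sum_(j <- s) lam' j *: p j).
  apply: IH.
  - by move=> j; rewrite /lam' divr_ge0.
  - by rewrite /lam' -mulr_suml divff.
  - move=> j js; rewrite /lam' mulf_eq0 negb_or => /andP[nz _]; apply: hC => //.
    by rewrite inE js orbT.
have -> : \sum_(j <- s) lam j *: p j = m *: \sum_(j <- s) lam' j *: p j.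
  rewrite scaler_sumr; apply: eq_bigr => j _; rewrite scalerA /lam' mulrC divfK //.
set q := \sum_(j <- s) lam' j *: p j in Cq *.
have [liz|linz] := eqVneq (lam i) 0.
  by move: l1; rewrite liz add0r => ->; rewrite scale0r add0r scale1r.
have Cp : C (p i) by apply: hC => //; exact: mem_head.
have li1 : lam i <= 1 by rewrite -l1 lerDl.
have := cC (p i) q (Itv01 (l0 i) li1); rewrite !inE => /(_ Cp Cq).
rewrite convE /=; congr (C (_ + _)); congr (_ *: _).
by rewrite -l1 addrAC subrr add0r.
Qed.

Lemma esum_list (R : realType) (A : choiceType) (g : A -> R) (s : seq A) :
  uniq s -> (forall a, 0 <= g a) -> (forall a, g a != 0 -> a \in s) ->
  (\esum_(a in setT) (g a)%:E = (\sum_(a <- s) g a)%:E)%E.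
Proof.
move=> us g0 gs.
rewrite (@eq_esum _ _ _ _ (fun a => if a \in [set` s] then (g a)%:E else 0%E)); last first.
  move=> a _; case: ifPn => // ns.
  by apply/eqP; rewrite eqe; apply: contraNT ns => /gs aS; rewrite in_setE.
rewrite -esum_mkcond esum_fset; last 2 first.
- exact: finite_seq.
- by move=> i _; rewrite lee_fin.
by rewrite -fsbig_seq // sumEFin.
Qed.

Lemma esum_list_le (R : realType) (A : choiceType) (g : A -> R) (s : seq A) :
  uniq s -> ((\sum_(a <- s) g a)%:E <= \esum_(a in setT) (g a)%:E)%E.
Proof.
move=> us; apply: esum_ge; exists [set` s]; first by split => //; exact: finite_seq.
by rewrite -fsbig_seq // sumEFin.
Qed.

Lemma esum_approx (R : realType) (A : choiceType) (g : A -> R) (e : R) :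
  (\esum_(a in setT) (g a)%:E = 1%:E)%E -> 0 < e ->
  exists2 s : seq A, uniq s & 1 - e < \sum_(a <- s) g a.
Proof.
move=> h e0.
have : ((1 - e)%:E < \esum_(a in setT) (g a)%:E)%E by rewrite h lte_fin gtrBl.
case/ereal_sup_gt => _ [X [fX _] <-].
rewrite fsbig_finite // sumEFin lte_fin => lt.
by exists (finmap.enum_fset (fset_set X)) => //; exact: finmap.fset_uniq.
Qed.

Definition pu_hyp (R : realType) (X : topologicalType) (A : choiceType)
  (xi : A -> X -> R) :=
  [/\ forall a, continuous (xi a), forall a x, 0 <= xi a x,
      forall a x, xi a x <= 1 &
      forall x, (\esum_(a in setT) (xi a x)%:E = 1%:E)%E].
Arguments pu_hyp {R X A}.

Lemma pu_tail (R : realType) (X : topologicalType) (A : choiceType)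
  (xi : A -> X -> R) : pu_hyp xi -> forall (x0 : X) (e : R), 0 < e ->
  exists2 s : seq A, uniq s &
    \forall y \near x0, forall a, a \notin s -> xi a y < e.
Proof.
move=> [xc x0 x1 xs] x e e0.
have e20 : 0 < e / 2 by rewrite divr_gt0.
have [s us hs] := esum_approx (xs x) e20.
exists s => //.
have := @continuous_sum _ _ _ s _ xc x; move/cvgrPdist_lt => /(_ _ e20).
apply: filterS => y hy a ans.
have ua : uniq (a :: s) by rewrite /= ans.
have := esum_list_le (fun b => xi b y) ua; rewrite xs lee_fin big_cons => h.
move: hy; rewrite ltr_distlC => /andP[h1 h2].
lra.
Qed.

Definition pu_sup (R : realType) (X : topologicalType) (A : choiceType)
  (xi : A -> X -> R) (x : X) := sup [set xi a x | a in [set: A]].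

Lemma pu_pos (R : realType) (X : topologicalType) (A : choiceType)
  (xi : A -> X -> R) : pu_hyp xi -> forall x, exists a, 0 < xi a x.
Proof.
move=> [xc x0 x1 xs] x; apply: contrapT => h.
have : (\esum_(a in [set: A]) (xi a x)%:E = 0)%E.
  apply: esum1 => a _; congr (_%:E); apply/eqP; rewrite eq_le x0 andbT.
  by rewrite leNgt; apply/negP => hp; apply: h; exists a.
by rewrite xs => /eqP; rewrite eqe oner_eq0.
Qed.

Lemma pu_has_sup (R : realType) (X : topologicalType) (A : choiceType)
  (xi : A -> X -> R) : pu_hyp xi -> forall x,
  has_sup [set xi a x | a in [set: A]].
Proof.
move=> H x; have [a _] := pu_pos H x; case: H => [xc x0 x1 xs].
split; first by exists (xi a x), a.
by exists 1 => _ [b _ <-].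
Qed.

Lemma pu_sup_ge (R : realType) (X : topologicalType) (A : choiceType)
  (xi : A -> X -> R) : pu_hyp xi -> forall a x, xi a x <= pu_sup xi x.
Proof.
move=> H a x; apply: (sup_upper_bound (pu_has_sup H x)); by exists a.
Qed.

Lemma pu_sup_gt0 (R : realType) (X : topologicalType) (A : choiceType)
  (xi : A -> X -> R) : pu_hyp xi -> forall x, 0 < pu_sup xi x.
Proof.
move=> H x; have [a ha] := pu_pos H x; exact: lt_le_trans ha (pu_sup_ge H a x).
Qed.

Lemma pu_sup_le (R : realType) (X : topologicalType) (A : choiceType)
  (xi : A -> X -> R) : pu_hyp xi -> forall x c,
  (forall a, xi a x <= c) -> pu_sup xi x <= c.
Proof.
move=> H x c hc; apply: ge_sup; first by case: (pu_has_sup H x).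
by move=> _ [a _ <-].
Qed.

Lemma pu_sup_adh (R : realType) (X : topologicalType) (A : choiceType)
  (xi : A -> X -> R) : pu_hyp xi -> forall x e, 0 < e ->
  exists a, pu_sup xi x - e < xi a x.
Proof.
move=> H x e e0; have [_ [a _ <-] h] := sup_adherent e0 (pu_has_sup H x).
by exists a.
Qed.

Lemma pu_sup_cont (R : realType) (X : topologicalType) (A : choiceType)
  (xi : A -> X -> R) : pu_hyp xi -> continuous (pu_sup xi).
Proof.
move=> H x; have H' := H; case: H' => [xc x0 x1 xs].
apply/cvgrPdist_lt => e e0.
have e20 : 0 < e / 2 by rewrite divr_gt0.
have [a0 ha0] := pu_sup_adh H x e20.
have [s us hs] := pu_tail H x e20.
have cs : \forall y \near x, forall a, a \in s -> `|xi a x - xi a y| < e / 2.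
  apply: near_seq => a _; move: (xc a x) => /cvgrPdist_lt; exact.
have c0 : \forall y \near x, `|xi a0 x - xi a0 y| < e / 2.
  by move: (xc a0 x) => /cvgrPdist_lt; apply.
apply: filterS (filterI cs (filterI c0 hs)) => y [hy1 [hy2 hy3]].
have Sx0 := pu_sup_gt0 H x.
have lo : pu_sup xi x - e < pu_sup xi y.
  apply: (lt_le_trans _ (pu_sup_ge H a0 y)).
  move: hy2; rewrite ltr_distlC => /andP[h1 h2]; lra.
have hi : pu_sup xi y <= pu_sup xi x + e / 2.
  apply: (pu_sup_le H) => a.
  have [aS|naS] := boolP (a \in s).
    have := hy1 a aS; rewrite ltr_distlC => /andP[h1 h2].
    have := pu_sup_ge H a x; lra.
  have := hy3 a naS; lra.
rewrite ltr_distlC; apply/andP; split; lra.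
Qed.

Definition pu_psi (R : realType) (X : topologicalType) (A : choiceType)
  (xi : A -> X -> R) (a : A) (x : X) := Num.max 0 (xi a x - pu_sup xi x / 2).

Lemma pu_psi_cont (R : realType) (X : topologicalType) (A : choiceType)
  (xi : A -> X -> R) : pu_hyp xi -> forall a, continuous (pu_psi xi a).
Proof.
move=> H a; have H' := H; case: H' => [xc x0 x1 xs].
move=> x.
apply: (@continuous_max _ _ (fun=> 0) (fun x => xi a x - pu_sup xi x / 2)).
  exact: cst_continuous.
apply: continuousB; first exact: xc.
apply: (@continuousM _ _ (pu_sup xi) (fun=> 2^-1)).
  exact: pu_sup_cont.
exact: cst_continuous.
Qed.

Lemma pu_psi_ge0 (R : realType) (X : topologicalType) (A : choiceType)
  (xi : A -> X -> R) a x : 0 <= pu_psi xi a x.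
Proof. by rewrite /pu_psi le_max lexx. Qed.

Lemma pu_psi_nz (R : realType) (X : topologicalType) (A : choiceType)
  (xi : A -> X -> R) : pu_hyp xi -> forall a x, pu_psi xi a x != 0 ->
  pu_sup xi x / 2 < xi a x.
Proof.
move=> H a x; rewrite /pu_psi; apply: contraNT; rewrite -leNgt -subr_le0 => h.
by apply/eqP/max_idPl.
Qed.

Lemma pu_psi_pos (R : realType) (X : topologicalType) (A : choiceType)
  (xi : A -> X -> R) : pu_hyp xi -> forall x, exists a, 0 < pu_psi xi a x.
Proof.
move=> H x; have S0 := pu_sup_gt0 H x.
have [a ha] : exists a, pu_sup xi x - pu_sup xi x / 2 < xi a x.
  by apply: pu_sup_adh => //; rewrite divr_gt0.
exists a; rewrite /pu_psi lt_max; apply/orP; right; rewrite subr_gt0.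
move: ha; lra.
Qed.

Lemma pu_psi_lf (R : realType) (X : topologicalType) (A : choiceType)
  (xi : A -> X -> R) : pu_hyp xi -> forall x0 : X, exists2 s : seq A, uniq s &
  \forall y \near x0, forall a, pu_psi xi a y != 0 -> a \in s.
Proof.
move=> H x0; set m := pu_sup xi x0.
have m0 : 0 < m := pu_sup_gt0 H x0.
have m4 : 0 < m / 4 by rewrite divr_gt0.
have [s us hs] := pu_tail H x0 m4.
exists s => //.
have m2 : 0 < m / 2 by rewrite divr_gt0.
have := @pu_sup_cont _ _ _ xi H x0; move/cvgrPdist_lt => /(_ _ m2) hc.
apply: filterS (filterI hc hs) => y [hy1 hy2] a; apply: contraTT => naS.
have := hy2 a naS; move: hy1; rewrite ltr_distlC => /andP[h1 h2] h3.
rewrite negbK /pu_psi; apply/eqP; apply/max_idPl.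
rewrite /m in h1 h2 h3 *; lra.
Qed.

Definition lfpu (R : realType) (X : topologicalType) (A : choiceType)
  (eta : A -> X -> R) :=
  [/\ forall a, continuous (eta a), forall a x, 0 <= eta a x &
      forall x0 : X, exists2 s : seq A, uniq s &
        \forall y \near x0, (forall a, eta a y != 0 -> a \in s) /\
                            \sum_(a <- s) eta a y = 1].
Arguments lfpu {R X A}.

Lemma normalize (R : realType) (X : topologicalType) (A : choiceType)
  (psi : A -> X -> R) :
  (forall a, continuous (psi a)) -> (forall a x, 0 <= psi a x) ->
  (forall x, exists a, 0 < psi a x) ->
  (forall x0 : X, exists2 s : seq A, uniq s &
     \forall y \near x0, forall a, psi a y != 0 -> a \in s) ->
  exists eta : A -> X -> R, lfpu eta /\ forall a x, eta a x != 0 -> psi a x != 0.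
Proof.
move=> pc p0 pp LF.
have LF' : forall x : X, exists s : seq A, uniq s /\
    \forall y \near x, forall a, psi a y != 0 -> a \in s.
  by move=> x; have [s ? ?] := LF x; exists s.
have [sL hsL] := choice LF'.
pose T x := \sum_(a <- sL x) psi a x.
have Tnear : forall x0, \forall y \near x0, T y = \sum_(a <- sL x0) psi a y.
  move=> x0; apply: filterS (hsL x0).2 => y hy; apply: sum_supp_eq => //.
  - exact: (hsL y).1.
  - exact: (hsL x0).1.
  - exact: (nbhs_singleton (hsL y).2).
have Tpos : forall x, 0 < T x.
  move=> x; have [a ha] := pp x.
  have aS : a \in sL x.
    by apply: (nbhs_singleton (hsL x).2); rewrite gt_eqF.
  exact: lt_le_trans ha (sum_ge_term (hsL x).1 aS (p0^~ x)).
have Tcont : continuous T.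
  move=> x0.
  have e : \forall y \near x0, (fun y => \sum_(a <- sL x0) psi a y) y = T y.
    by apply: filterS (Tnear x0) => y ->.
  apply: cvg_trans (near_eq_cvg e) _.
  rewrite (nbhs_singleton (Tnear x0)).
  exact: (@continuous_sum _ _ _ (sL x0) _ pc x0).
exists (fun a x => psi a x / T x); split; last first.
  by move=> a x; rewrite mulf_eq0 negb_or => /andP[].
split.
- move=> a x; apply: (@continuousM _ _ (psi a) (fun x => (T x)^-1)); first exact: pc.
  by apply: continuousV; [rewrite gt_eqF | exact: Tcont].
- by move=> a x; rewrite divr_ge0 // ltW.
move=> x0; exists (sL x0); first exact: (hsL x0).1.
apply: filterS (filterI (hsL x0).2 (Tnear x0)) => y [h1 h2]; split.
  by move=> a; rewrite mulf_eq0 negb_or => /andP[/h1].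
by rewrite -mulr_suml -h2 divff // gt_eqF.
Qed.

Lemma pu_to_lfpu (R : realType) (X : topologicalType) (A : choiceType)
  (xi : A -> X -> R) : pu_hyp xi ->
  exists eta : A -> X -> R, lfpu eta /\ forall a x, eta a x != 0 -> xi a x != 0.
Proof.
move=> H.
have [eta [L he]] := normalize (pu_psi_cont H) (@pu_psi_ge0 _ _ _ xi)
  (pu_psi_pos H) (pu_psi_lf H).
exists eta; split => // a x /he /(pu_psi_nz H) h.
by rewrite gt_eqF // (lt_trans _ h) // divr_gt0 // pu_sup_gt0.
Qed.

Definition cov_idx (X : Type) (CU : set (set X)) := {W : set X | CU W}.
HB.instance Definition _ (X : Type) (CU : set (set X)) :=
  gen_eqMixin (cov_idx CU).
HB.instance Definition _ (X : Type) (CU : set (set X)) :=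
  gen_choiceMixin (cov_idx CU).

Lemma sum_apply (T : Type) (V : zmodType) (I : Type) (s : seq I) (F : I -> T -> V) (t : T) :
  (\sum_(i <- s) F i) t = \sum_(i <- s) F i t.
Proof.
elim: s => [|i s IH]; first by rewrite !big_nil.
by rewrite !big_cons -IH.
Qed.

Lemma row_near (R : realType) (X : topologicalType) (n : nat)
  (g : 'I_n -> X -> R) (T : set 'rV[R]_n) (x0 : X) :
  (forall i, continuous (g i)) -> open T -> T (\row_i g i x0) ->
  \forall y \near x0, T (\row_i g i y).
Proof.
move=> gc oT Tx; rewrite openE in oT.
have := oT _ Tx; rewrite /interior /= => -[P hP hPT].
have : \forall y \near x0, forall i j, P i j ((\row_k g k y) i j).
  apply: filter_forall => i; apply: filter_forall => j.
  have := hP i j; rewrite mxE => hn.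
  move/(gc j x0): hn => hn; near=> y; rewrite mxE; near: y; exact: hn.
by apply: filterS => y hy; apply: hPT.
Unshelve. all: by end_near.
Qed.

Lemma ind_nz (X : Type) (R : realType) (W W' : set X) :
  (\1_[set W] : set X -> R) W' != 0 -> W' = W.
Proof. by rewrite indicE in_set1; case: (W' =P W) => // _; rewrite eqxx. Qed.

Lemma c00_ind (R : realType) (X : Type) (CU : set (set X)) (W : set X) :
  CU W -> c00 CU (\1_[set W] : set X -> R).
Proof.
move=> cW; split.
  by apply: (@sub_finite_set _ _ [set W]) => [W' /ind_nz ->//|]; exact: finite_set1.
by move=> W' /ind_nz ->.
Qed.

Lemma iii_ii (R : realType) (X : topologicalType) :
  (forall (A : choiceType) (U : A -> set X), open_icover U ->
          exists xi : A -> X -> R, subordinated_pu U xi) ->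
  (forall CU : set (set X), open_cover CU ->
          exists f : X -> (set X -> R), canonical_map CU f).
Proof.
move=> H3 CU [hCo hCu].
pose U (a : cov_idx CU) : set X := proj1_sig a.
have oU : open_icover U.
  split; first by move=> [W hW]; exact: hCo.
  apply/seteqP; split => // x _.
  have : (\bigcup_(W in CU) W) x by rewrite hCu.
  by case=> W hW Wx; exists (exist _ W hW).
have [xi [xc x01 xs xU]] := H3 _ U oU.
have hpu : pu_hyp xi.
  by split => // a x; have /andP[] := x01 a x.
have [eta [[ec e0 eL] exi]] := pu_to_lfpu hpu.
have eU : forall a x, eta a x != 0 -> U a x.
  by move=> a x /exi; exact: xU.
have eL' : forall x0 : X, exists s, uniq s /\
    \forall y \near x0, (forall a, eta a y != 0 -> a \in s) /\
                        \sum_(a <- s) eta a y = 1.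
  by move=> x0; have [s ? ?] := eL x0; exists s.
have [sL hsL] := choice eL'.
pose ind (a : cov_idx CU) : set X -> R := \1_[set proj1_sig a].
pose f x := \sum_(a <- sL x) eta a x *: ind a.
have hx : forall x, (forall a, eta a x != 0 -> a \in sL x) /\
                    \sum_(a <- sL x) eta a x = 1.
  by move=> x; exact: (nbhs_singleton (hsL x).2).
have fnz : forall x a, eta a x *: ind a != 0 -> eta a x != 0.
  by move=> x a; apply: contraNN => /eqP ->; rewrite scale0r.
exists f; split.
-
  move=> x; have [hx1 hx2] := hx x.
  pose G := [seq a <- sL x | eta a x != 0].
  have uG : uniq G by rewrite filter_uniq // (hsL x).1.
  have fG : f x = \sum_(a <- G) eta a x *: ind a.
    apply: sum_supp_eq; [exact: (hsL x).1 | exact: uG | | ].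
      by move=> a /fnz /hx1.
    by move=> a /fnz nz; rewrite mem_filter nz (hx1 _ nz).
  have sG : \sum_(a <- G) eta a x = 1.
    rewrite -hx2; apply: sum_supp_eq; [exact: uG | exact: (hsL x).1 | | ].
      by move=> a nz; rewrite mem_filter nz (hx1 _ nz).
    exact: hx1.
  have GE : forall a, a \in G -> U a x.
    by move=> a; rewrite mem_filter => /andP[/eU].
  move: G uG fG sG GE => [|a0 G'] uG fG sG GE.
    by move: sG; rewrite big_nil => /eqP; rewrite eq_sym oner_eq0.
  set G := a0 :: G' in uG fG sG GE *.
  exists (size G), (fun i => proj1_sig (nth a0 G i)),
    (fun i => eta (nth a0 G i) x); split.
  + by [].
  + by move=> i; exact: (proj2_sig (nth a0 G i)).
  + by exists x => i; apply: GE; rewrite mem_nth.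
  + split; first by move=> i; exact: e0.
    by rewrite -sG (big_nth a0) big_mkord.
  + by rewrite fG (big_nth a0) big_mkord.
-
  move=> V hV; rewrite openE => x0 /= Vx0; rewrite /interior.
  have [hx1 hx2] := hx x0.
  move: (sL x0) (hsL x0) hx1 hx2 => s [us hs] _ hs1.
  move: s us hs hs1 => [|a0 s'] us hs hs1.
    by move: hs1; rewrite big_nil => /eqP; rewrite eq_sym oner_eq0.
  set s := a0 :: s' in us hs hs1 *.
  pose n := size s.
  pose v (i : 'I_n) := ind (nth a0 s i).
  have hv : forall i, c00 CU (v i) by move=> i; apply: c00_ind; exact: proj2_sig.
  have oT := hV n v hv.
  pose g (i : 'I_n) y := eta (nth a0 s i) y.
  have key : \forall y \near x0, f y = \sum_(i < n) (\row_j g j y) ord0 i *: v i.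
    apply: filterS hs => y [hy1 _].
    rewrite (_ : f y = \sum_(a <- s) eta a y *: ind a).
      by rewrite (big_nth a0) big_mkord; apply: eq_bigr => i _; rewrite mxE.
    apply: sum_supp_eq; [exact: (hsL y).1 | exact: us | | ].
      by move=> a /fnz /(hx y).1.
    by move=> a /fnz /hy1.
  have Tx0 : [set t : 'rV[R]_n | V (\sum_(i < n) t ord0 i *: v i)] (\row_j g j x0).
    by rewrite /= -(nbhs_singleton key).
  have := row_near (fun i => ec (nth a0 s i)) oT Tx0.
  by apply: filterS2 key => y E hT; rewrite /preimage /= E; exact: hT.
-
  move=> W hW x /=; rewrite /f sum_apply => /sum_nz_term [a _].
  move=> h0; have h : eta a x * (\1_[set proj1_sig a] : set X -> R) W != 0 := h0.
  have ea : eta a x != 0 by apply: contraNN h => /eqP ->; rewrite mul0r.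
  have Wa : W = proj1_sig a.
    by apply: ind_nz; apply: contraNN h => /eqP ->; rewrite mulr0.
  by rewrite Wa; exact: eU.
Unshelve. all: by end_near.
Qed.

Definition Lmap (R : realType) (X : Type) (E : lmodType R) (ee : set X -> E)
  (g : set X -> R) : E :=
  \sum_(W <- finmap.enum_fset (fset_set [set W | g W != 0])) g W *: ee W.

Lemma LmapE (R : realType) (X : Type) (E : lmodType R) (ee : set X -> E)
  (g : set X -> R) (t : seq (set X)) :
  finite_set [set W | g W != 0] -> uniq t -> (forall W, g W != 0 -> W \in t) ->
  Lmap ee g = \sum_(W <- t) g W *: ee W.
Proof.
move=> fg ut ht; rewrite /Lmap.
apply: sum_supp_eq; [exact: finmap.fset_uniq | exact: ut | |].
- move=> W nz; have gW : g W != 0 by apply: contraNN nz => /eqP ->; rewrite scale0r.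
  by rewrite in_fset_set // inE.
- move=> W nz; apply: ht; apply: contraNN nz => /eqP ->; by rewrite scale0r.
Qed.

Lemma Lmap_lin (R : realType) (X : Type) (E : lmodType R) (ee : set X -> E)
  (n : nat) (v : 'I_n -> set X -> R) (t : 'I_n -> R) :
  (forall i, finite_set [set W | v i W != 0]) ->
  Lmap ee (\sum_(i < n) t i *: v i) = \sum_(i < n) t i *: Lmap ee (v i).
Proof.
move=> fv.
pose tl := undup (flatten [seq finmap.enum_fset (fset_set [set W | v i W != 0])
                           | i <- enum 'I_n]).
have utl : uniq tl by exact: undup_uniq.
have mtl : forall i W, v i W != 0 -> W \in tl.
  move=> i W nz; rewrite mem_undup; apply/flattenP.
  exists (finmap.enum_fset (fset_set [set W | v i W != 0])).
    by apply: map_f; rewrite mem_enum.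
  by rewrite in_fset_set // inE.
have sv : forall W, (\sum_(i < n) t i *: v i) W = \sum_(i < n) t i * v i W.
  by move=> W; rewrite sum_apply.
have nz : forall W, (\sum_(i < n) t i *: v i) W != 0 -> W \in tl.
  move=> W; rewrite sv => /sum_nz_term [i _] h.
  by apply: (mtl i); apply: contraNN h => /eqP ->; rewrite mulr0.
rewrite (@LmapE _ _ _ _ _ tl) //; last first.
  apply: (@sub_finite_set _ _ [set` tl]); last exact: finite_seq.
  by move=> W /= /nz.
under eq_bigr do rewrite sv scaler_suml.
rewrite exchange_big /=; apply: eq_bigr => i _.
rewrite (@LmapE _ _ _ _ _ tl) // ?scaler_sumr; last exact: mtl.
by apply: eq_bigr => W _; rewrite scalerA.
Qed.

Lemma ii_i (R : realType) (X : topologicalType) :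
  (forall CU : set (set X), open_cover CU ->
          exists f : X -> (set X -> R), canonical_map CU f) ->
  (forall (E : lmodType R) (Phi : X -> set E),
          (forall x, Phi x !=set0) ->
          (forall x, convex_set (Phi x : set (convex_lmodType E))) ->
          totally_lsc Phi ->
          exists f : X -> E,
            (forall x, Phi x (f x)) /\ finite_continuous setT f).
Proof.
move=> H2 E Phi hne hcv hlsc.
pose CU := [set W : set X | exists e, W = [set x | Phi x e] /\ W !=set0].
have oPe : forall e, open [set x | Phi x e].
  move=> e; have := hlsc [set e].
  congr open; apply/seteqP; split => x /=; first by case=> y [hy <-].
  by move=> h; exists e.
have hCU : open_cover CU.
  split; first by move=> W [e [-> ne]]; split => //; exact: oPe.
  apply/seteqP; split => // x _; have [e he] := hne x.
  by exists [set y | Phi y e] => //; exists e; split => //; exists x.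
have [fc [hN hfc hsupp]] := H2 CU hCU.
pose ee (W : set X) : E :=
  if pselect (exists e, W = [set x | Phi x e]) is left p then projT1 (cid p) else 0.
have eeP : forall W, CU W -> W = [set x | Phi x (ee W)].
  move=> W [e [hW _]]; rewrite /ee; case: pselect => [p|[]]; last by exists e.
  exact: (projT2 (cid p)).
have c00fc : forall x, finite_set [set W | fc x W != 0].
  move=> x; have [n [sigma [lam [_ hs _ _ ->]]]] := hN x.
  apply: (@sub_finite_set _ _ [set` [seq sigma i | i <- enum 'I_n]]); last exact: finite_seq.
  move=> W /=; rewrite sum_apply => /sum_nz_term [i _ h0].
  have h : lam i * (\1_[set sigma i] : set X -> R) W != 0 := h0.
  have -> : W = sigma i by apply: (@ind_nz _ R); apply: contraNN h => /eqP ->; rewrite mulr0.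
  by apply: map_f; rewrite mem_enum.
have Lind : forall W, Lmap ee (\1_[set W] : set X -> R) = ee W.
  move=> W; rewrite (@LmapE _ _ _ _ _ [:: W]) //.
  - by rewrite big_cons big_nil addr0 indicE in_set1 eqxx scale1r.
  - apply: (@sub_finite_set _ _ [set W]); last exact: finite_set1.
    by move=> W' /= /ind_nz.
  - by move=> W' /ind_nz ->; rewrite mem_head.
exists (fun x => Lmap ee (fc x)); split.
- move=> x; have [n [sigma [lam [_ hs _ [l0 l1] hg]]]] := hN x.
  rewrite hg Lmap_lin; last by move=> i; exact: (@c00_ind R _ _ _ (hs i)).1.
  under eq_bigr do rewrite Lind.
  apply: convex_comb => // i _ li.
  have xs : sigma i x.
    apply: (hsupp _ (hs i)) => /=; rewrite hg sum_apply.
    have : lam i <= \sum_(j < n) lam j * (\1_[set sigma j] : set X -> R) (sigma i).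
      rewrite (bigD1 i) //= indicE in_set1 eqxx mulr1 lerDl.
      by apply: sumr_ge0 => j _; rewrite indicE mulr_ge0 // ler0n.
    have : 0 < lam i by rewrite lt_def li l0.
    move=> h1 h2; rewrite gt_eqF //; exact: lt_le_trans h1 h2.
  by move: xs; rewrite {1}(eeP _ (hs i)).
- move=> V hV.
  have -> : (fun x => Lmap ee (fc x)) @^-1` V = fc @^-1` (Lmap ee @^-1` V) by [].
  apply: hfc => n v hv.
  suff -> : [set t : 'rV[R]_n | (Lmap ee @^-1` V) (\sum_(i < n) t ord0 i *: v i)] =
            [set t | V (\sum_(i < n) t ord0 i *: Lmap ee (v i))].
    by apply: hV.
  apply/seteqP; split => t /=; rewrite Lmap_lin //; by move=> i; case: (hv i).

Qed.

Lemma i_iii (R : realType) (X : topologicalType) :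
  (forall (E : lmodType R) (Phi : X -> set E),
          (forall x, Phi x !=set0) ->
          (forall x, convex_set (Phi x : set (convex_lmodType E))) ->
          totally_lsc Phi ->
          exists f : X -> E,
            (forall x, Phi x (f x)) /\ finite_continuous setT f) ->
  (forall (A : choiceType) (U : A -> set X), open_icover U ->
          exists xi : A -> X -> R, subordinated_pu U xi).
Proof.
move=> H1 A U [hU hcov].
pose Phi (x : X) : set (A -> R) := [set g : A -> R | exists s : seq A,
  [/\ uniq s, forall a, g a != 0 -> a \in s, forall a, 0 <= g a,
      forall a, g a != 0 -> U a x & \sum_(a <- s) g a = 1]].
have hne : forall x, Phi x !=set0.
  move=> x; have : (\bigcup_(a in setT) U a) x by rewrite hcov.
  case=> a _ Uax.
  exists (fun b => if b == a then 1 else 0), [:: a]; split => //.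
  - by move=> b; case: (b =P a) => [->|_]; rewrite ?mem_head ?eqxx.
  - by move=> b; case: (b =P a).
  - by move=> b; case: (b =P a) => [->|_]; rewrite ?eqxx.
  - by rewrite big_cons big_nil eqxx addr0.
have hcv : forall x, convex_set (Phi x : set (convex_lmodType (A -> R : lmodType R))).
  move=> x g1 g2 p; rewrite !inE => -[s1 [u1 m1 p1 U1 S1]] [s2 [u2 m2 p2 U2 S2]].
  rewrite convE.
  have q0 : 0 <= p%:num by [].
  have q1 : p%:num <= 1 by [].
  set h := (_ + _ : A -> R).
  have hE : forall a, h a = p%:num * g1 a + (1 - p%:num) * g2 a by [].
  pose t := undup (s1 ++ s2).
  have ut : uniq t by exact: undup_uniq.
  have hnz : forall a, h a != 0 -> g1 a != 0 \/ g2 a != 0.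
    move=> a; rewrite hE; apply: contraNP => /not_orP[/negP/negPn/eqP -> /negP/negPn/eqP ->].
    by rewrite !mulr0 addr0.
  exists t; split => //.
  - move=> a /hnz [/m1|/m2] h'; by rewrite mem_undup mem_cat h' ?orbT.
  - move=> a; rewrite hE addr_ge0 // mulr_ge0 //; by rewrite subr_ge0.
  - by move=> a /hnz [/U1|/U2].
  - have e1 : \sum_(a <- t) g1 a = 1.
      rewrite -S1; apply: sum_supp_eq; [exact: ut | exact: u1 | | exact: m1].
      by move=> a nz; rewrite mem_undup mem_cat m1.
    have e2 : \sum_(a <- t) g2 a = 1.
      rewrite -S2; apply: sum_supp_eq; [exact: ut | exact: u2 | | exact: m2].
      by move=> a nz; rewrite mem_undup mem_cat m2 ?orbT.
    rewrite (eq_bigr _ (fun a _ => hE a)) big_split /= -!mulr_sumr e1 e2.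
    by rewrite !mulr1 addrC subrK.
have hlsc : totally_lsc Phi.
  move=> V; rewrite openE => x0 [g [[s [us ms ps Us Ss]] Vg]]; rewrite /interior.
  have : \forall y \near x0, forall a, a \in s -> g a != 0 -> U a y.
    apply: near_seq => a _.
    have [nz|z] := boolP (g a != 0).
      have oUa := (hU a).1; rewrite openE in oUa.
      by apply: filterS (oUa _ (Us _ nz)) => y h _.
    by apply: nearW => y.
  apply: filterS => y hy; exists g; split => //; exists s; split => //.
  by move=> a nz; apply: hy => //; exact: ms.
have [F [hF cF]] := H1 (A -> R : lmodType R) Phi hne hcv hlsc.
exists (fun a x => F x a); split.
- move=> a; apply/continuousP => O oO.
  have := cF [set g : A -> R | O (g a)]; apply.
  move=> n v _.
  have cq : continuous (fun t : 'rV[R]_n => \sum_(i < n) t ord0 i * v i a).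
    apply: continuous_sum => i t.
    apply: (@continuousM _ _ (fun t : 'rV[R]_n => t ord0 i) (fun=> v i a)).
      exact: coord_continuous.
    exact: cst_continuous.
  move/continuousP: cq => /(_ O oO); congr open.
  by apply/seteqP; split => t /=; rewrite sum_apply.
- move=> a x; have [s [us ms ps Us Ss]] := hF x; rewrite ps /=.
  have [z|nz] := eqVneq (F x a) 0; first by rewrite z ler01.
  by rewrite -Ss; apply: sum_ge_term => //; exact: ms.
- move=> x; have [s [us ms ps Us Ss]] := hF x.
  by rewrite (@esum_list _ _ _ s) // Ss.
- move=> a x /=; have [s [us ms ps Us Ss]] := hF x; exact: Us.
Qed.

Unset Implicit Arguments.

Theorem theorem5p1 (R : realType) (X : topologicalType) :
  [<-> (* (i) *)
       (forall (E : lmodType R) (Phi : X -> set E),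
          (forall x, Phi x !=set0) ->
          (forall x, convex_set (Phi x : set (convex_lmodType E))) ->
          totally_lsc Phi ->
          exists f : X -> E,
            (forall x, Phi x (f x)) /\ finite_continuous setT f);
       (* (ii) *)
       (forall CU : set (set X), open_cover CU ->
          exists f : X -> (set X -> R), canonical_map CU f);
       (* (iii) *)
       (forall (A : choiceType) (U : A -> set X), open_icover U ->
          exists xi : A -> X -> R, subordinated_pu U xi)].
Proof.
have i3 := @i_iii R X; have i2 := @ii_i R X; have i32 := @iii_ii R X.
tfae.
- by move=> h; apply: i32; exact: i3 h.
- by move=> h; apply: i3; exact: i2 h.
- by move=> h; apply: i2; exact: i32 h.
Qed.
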